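(* For every integer $n\ge1$, $\operatorname{num}_{\mathcal O}(n,-1)=o(n!)$, where $o(M)$ denotes the largest odd divisor of a positive integer $M$.
   Context: An odd partition of $n$ is a partition of $n$ (finite nonincreasing sequence of positive integers summing to $n$) all of whose parts are odd; $\mathcal O(n)$ is the set of odd partitions of $n$, and $m_\lambda(i)$ the number of parts of $\lambda$ equal to $i$. For $\lambda\in\mathcal O(n)$ let $h_{\mathcal O,\lambda}(x)=\prod_{i\ge1,\ i\text{ odd}}(1+x^i)^{\lfloor n/i\rfloor-m_\lambda(i)}$. Let $G_{\mathcal O}(n,x)=\gcd\{h_{\mathcal O,\lambda}(x):\lambda\in\mathcal O(n)\}$ in $\mathbb{Z}[x]$ (normalized with positive leading coefficient), and $\operatorname{num}_{\mathcal O}(n,x)=\frac{1}{G_{\mathcal O}(n,x)}\sum_{\lambda\in\mathcal O(n)}h_{\mathcal O,\lambda}(x)\in\mathbb{Z}[x]$. *)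

(* Defs.v *)
From HB Require Import structures.
From mathcomp Require Import all_boot all_order all_algebra.
From Stdlib Require Import ClassicalEpsilon.
Set Implicit Arguments. Unset Strict Implicit. Unset Printing Implicit Defensive.
Import Order.TTheory GRing.Theory Num.Theory.

Definition is_odd_partition (n : nat) (s : seq nat) : bool :=
  [&& sorted geq s, all odd s & sumn s == n].

Fixpoint bseqs (k m : nat) : seq (seq nat) :=
  match k with
  | 0 => [:: [::]]
  | k'.+1 => [::] :: [seq x :: s | x <- iota 0 m.+1, s <- bseqs k' m]
  end.

(* The set O(n) of odd partitions of n, as a duplicate-free list.
   (Every partition of n has length <= n and parts <= n.) *)
Definition odd_partitions (n : nat) : seq (seq nat) :=
  [seq s <- undup (bseqs n n) | is_odd_partition n s].

Local Open Scope ring_scope.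

(* h_{O,lambda}(x) = prod_{i odd} (1 + x^i)^(floor(n/i) - m_lambda(i));
   factors with i > n are 1 and are omitted. *)
Definition h_O (n : nat) (l : seq nat) : {poly int} :=
  \prod_(i < n.+1 | odd i) (1 + 'X^i) ^+ (n %/ i - count_mem (i : nat) l)%N.

Definition dvdZX (g p : {poly int}) : Prop := exists q : {poly int}, p = q * g.

Definition is_G_O (n : nat) (g : {poly int}) : Prop :=
  [/\ (forall l, l \in odd_partitions n -> dvdZX g (h_O n l)),
      (forall d : {poly int},
          (forall l, l \in odd_partitions n -> dvdZX d (h_O n l)) -> dvdZX d g)
    & 0 < lead_coef g].

Definition G_O (n : nat) : {poly int} := epsilon (inhabits 0) (is_G_O n).

Definition sum_h_O (n : nat) : {poly int} :=
  \sum_(l <- odd_partitions n) h_O n l.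

Definition num_O (n : nat) : {poly int} :=
  epsilon (inhabits 0) (fun q : {poly int} => sum_h_O n = q * G_O n).

Definition odd_part (M : nat) : nat :=
  (\max_(d < M.+1 | odd d && (d %| M)) d)%N.

(* Main.v *)
From HB Require Import structures.
Require Import Defs.
From mathcomp Require Import all_boot all_order all_algebra all_field.
From Stdlib Require Import ClassicalEpsilon.
From mathcomp Require Import zify ring.
Import Order.TTheory GRing.Theory Num.Theory.
Set Implicit Arguments. Unset Strict Implicit. Unset Printing Implicit Defensive.

Local Open Scope ring_scope.

Definition Psi (d : nat) : {poly int} := 'Phi_(d.*2).

Definition divs (N i : nat) := [seq d <- iota 0 N | (d %| i)%N].

Lemma divisors_prod (F : nat -> {poly int}) n N : (0 < n)%N -> (n < N)%N ->
  \prod_(d <- divisors n) F d = \prod_(d <- divs N n) F d.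
Proof.
move=> n0 nN; apply: perm_big; have [u _ m] := divisors_correct n0.
apply: uniq_perm => //; first by rewrite filter_uniq ?iota_uniq.
move=> d; rewrite m mem_filter mem_iota add0n /=.
case dn: (d %| n)%N => //=; have := dvdn_leq n0 dn; lia.
Qed.

Lemma divs_odd N i d : odd i -> d \in divs N i -> odd d.
Proof.
move=> oi; rewrite mem_filter => /andP[dd _].
by move: oi; rewrite -(divnK dd) oddM => /andP[].
Qed.

Lemma perm_divs2 N i : odd i -> (i < N)%N ->
  perm_eq (divs N.*2 i.*2) ([seq d.*2 | d <- divs N i] ++ divs N i).
Proof.
move=> oi iN.
have i0 : (0 < i)%N by case: i oi iN.
apply: uniq_perm.
- by rewrite filter_uniq ?iota_uniq.
- rewrite cat_uniq map_inj_uniq ?filter_uniq ?iota_uniq //=; last exact: double_inj.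
  rewrite andbT; apply/hasPn => x /(divs_odd oi) ox; apply/mapP => -[y _ xy].
  by move: ox; rewrite xy odd_double.
move=> x; rewrite mem_cat !mem_filter !mem_iota !add0n /=.
have [ox|ex] := boolP (odd x).
- have -> : (x \in [seq d.*2 | d <- divs N i]) = false.
    by apply/mapP => -[y _ xy]; move: ox; rewrite xy odd_double.
  rewrite /= -muln2 Gauss_dvdl; last first.
    by rewrite coprimen2.
  case xi: (x %| i)%N => //=.
  have := dvdn_leq i0 xi; rewrite -!muln2; lia.
- have -> : ((x %| i) && (0 <= x < N))%N = false.
    apply/negP => /andP[xi _]; move: ex; rewrite (_ : odd x) //.
    by move: oi; rewrite -(divnK xi) oddM => /andP[].
  rewrite orbF; have xe : x = (x./2).*2 by rewrite -{1}(odd_double_half x) (negbTE ex).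
  rewrite xe -!muln2 dvdn_pmul2r // ltn_pmul2r // muln2; apply/idP/mapP.
    by case/andP => a b; exists x./2 => //; rewrite mem_filter mem_iota a b.
  case=> y; rewrite mem_filter mem_iota => /andP[yi /= yN] xy.
  by move: xy => /double_inj ->; rewrite yi -(add0n N) yN.
Qed.

Lemma onepXi i N : odd i -> (i < N)%N ->
  1 + 'X^i = \prod_(d <- divs N i) Psi d.
Proof.
move=> oi iN; have i0 : (0 < i)%N by case: i oi iN.
have i20 : (0 < i.*2)%N by rewrite double_gt0.
have h1 := @prod_Cyclotomic _ i20.
rewrite (@divisors_prod _ _ N.*2) ?double_gt0 ?ltn_double // in h1.
rewrite (perm_big _ (perm_divs2 oi iN)) big_cat big_map /= in h1.
have h2 := @prod_Cyclotomic i i0.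
rewrite (@divisors_prod _ _ N) // in h2.
rewrite h2 in h1.
have nz : ('X^i - 1 : {poly int}) != 0.
  by rewrite -size_poly_eq0 size_XnsubC.
apply: (mulIf nz); rewrite /Psi.
by rewrite h1 -muln2 exprM; ring.
Qed.

Local Close Scope ring_scope.

Lemma mem_bseqs k m s : size s <= k -> all (fun x => x <= m) s -> s \in bseqs k m.
Proof.
elim: k s => [|k IH] s; first by case: s.
case: s => [|x s]; first by rewrite /= inE eqxx.
move=> sk /andP[xm am].
have H : x :: s \in [seq y :: t | y <- iota 0 m.+1, t <- bseqs k m].
  apply/allpairsPdep; exists x, s; split => //.
    by rewrite mem_iota add0n ltnS xm.
  exact: IH.
by change (x :: s \in [::] :: [seq y :: t | y <- iota 0 m.+1, t <- bseqs k m]); rewrite inE H orbT.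
Qed.

Lemma mem_op n l : (l \in odd_partitions n) = is_odd_partition n l.
Proof.
rewrite /odd_partitions mem_filter; case lP: (is_odd_partition n l) => //=.
rewrite mem_undup; move: lP => /and3P[_ ao /eqP sn]; apply: mem_bseqs.
- elim: l n ao sn => //= x l IH n /andP[ox ol] <-.
  have := IH (sumn l) ol erefl; case: x ox => //= x _; lia.
- apply/allP => x xl; rewrite -sn; elim: l xl {ao sn} => //= y l IH.
  rewrite inE => /orP[/eqP ->|/IH]; lia.
Qed.

Lemma uniq_op n : uniq (odd_partitions n).
Proof. by rewrite filter_uniq ?undup_uniq. Qed.

Lemma count_dvd_sum d l : all odd l -> count (fun x => d %| x) l * d <= sumn l.
Proof.
elim: l => //= x l IH /andP[ox ol]; rewrite mulnDl; have := IH ol.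
case dx: (d %| x) => /=; last by lia.
have x0 : 0 < x by case: x ox {dx}.
have := dvdn_leq x0 dx; lia.
Qed.

Lemma sum_count_mem N (P : pred nat) s : all (fun x => x < N) s ->
  \sum_(i < N | P i) count_mem (i : nat) s = count P s.
Proof.
elim: s => /= [|x s IH]; first by rewrite big1.
move=> /andP[xN aN]; rewrite big_split /= IH //; congr (_ + _).
rewrite big_mkcond (bigD1 (Ordinal xN)) //= eqxx big1 ?addn0 => [|i ix].
  by case: (P x).
have : x != i by apply: contra ix => /eqP xi; apply/eqP/val_inj.
by move/negbTE => ->; case: (P i).
Qed.

Definition Sx n d := \sum_(i < n.+1 | odd i && (d %| i)) n %/ i.
Definition Ex n l d := \sum_(i < n.+1 | odd i && (d %| i)) (n %/ i - count_mem (i : nat) l).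
Definition cx n d := Sx n d - n %/ d.

Lemma op_bound n l : is_odd_partition n l -> all (fun x => x < n.+1) l.
Proof.
move=> /and3P[_ _ /eqP <-]; apply/allP => x xl; rewrite ltnS.
elim: l xl => //= y l IH; rewrite inE => /orP[/eqP ->|/IH]; lia.
Qed.

Lemma K_le n l d : is_odd_partition n l -> 0 < d -> count (fun x => d %| x) l <= n %/ d.
Proof.
move=> lP d0; rewrite leq_divRL //; move: lP => /and3P[_ ao /eqP <-].
exact: count_dvd_sum.
Qed.

Lemma Ex_eq n l d : is_odd_partition n l -> 0 < d ->
  Ex n l d = Sx n d - count (fun x => d %| x) l.
Proof.
move=> lP d0; rewrite /Ex sumnB; last first.
  move=> i /andP[oi _]; have i0 : 0 < i by case: (nat_of_ord i) oi.
  apply: leq_trans (K_le lP i0); apply: sub_count => x /eqP ->; exact: dvdnn.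
rewrite (sum_count_mem (fun i => odd i && (d %| i))) ?(op_bound lP) //.
congr (_ - _); apply: eq_in_count => x xl /=.
by move: lP => /and3P[_ /allP /(_ x xl) -> _].
Qed.

Lemma S_ge n d : odd d -> d <= n -> n %/ d <= Sx n d.
Proof.
move=> od dn; have dN : d < n.+1 by [].
by rewrite /Sx (bigD1 (Ordinal dN)) /= ?od ?dvdnn // leq_addr.
Qed.

Lemma Ex_c n l d : is_odd_partition n l -> odd d -> d <= n ->
  Ex n l d = cx n d + (n %/ d - count (fun x => d %| x) l).
Proof.
move=> lP od dn; have d0 : 0 < d by case: d od dn.
rewrite Ex_eq // /cx; have := K_le lP d0; have := S_ge od dn; lia.
Qed.

Lemma sorted_nseq_cat a d t : sorted geq t -> all (fun x => x <= d) t ->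
  sorted geq (nseq a d ++ t).
Proof.
move=> st at_; elim: a => //= a IH.
rewrite path_sortedE; last by move=> x y z /=; lia.
rewrite IH andbT all_cat at_ andbT all_nseq; apply/orP; right; exact: leqnn.
Qed.

Lemma lam_op n d : odd d -> is_odd_partition n (nseq (n %/ d) d ++ nseq (n %% d) 1).
Proof.
move=> od; have d0 : 0 < d by case: d od.
apply/and3P; split.
- apply: sorted_nseq_cat; last by rewrite all_nseq d0 orbT.
  rewrite -[nseq _ 1]cats0; exact: sorted_nseq_cat.
- by rewrite all_cat !all_nseq od !orbT.
- rewrite sumn_cat !sumn_nseq; have := divn_eq n d; lia.
Qed.

Lemma lam_count n d : odd d ->
  count (fun x => d %| x) (nseq (n %/ d) d ++ nseq (n %% d) 1) = n %/ d.
Proof.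
move=> od; rewrite count_cat !count_nseq dvdnn mul1n dvdn1.
by case: eqP => [->|]; rewrite ?modn1 ?muln0 ?addn0.
Qed.

Lemma ones_op n : is_odd_partition n (nseq n 1).
Proof.
apply/and3P; split.
- rewrite -[nseq _ 1]cats0; exact: sorted_nseq_cat.
- by rewrite all_nseq orbT.
- by rewrite sumn_nseq mul1n.
Qed.

Lemma ones_count n d : count (fun x => d %| x) (nseq n 1) = (d == 1) * n.
Proof. by rewrite count_nseq dvdn1. Qed.

Lemma size_sumn l : all odd l -> size l <= sumn l /\ (size l == sumn l) = all (pred1 1) l.
Proof.
elim: l => //= x l IH /andP[ox ol]; have [h1 h2] := IH ol; split; first by case: x ox; lia.
case: x ox => // -[|x] ox /=; first by rewrite -h2 add1n eqSS.
by apply/negbTE/eqP; lia.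
Qed.

Lemma op_size n l : is_odd_partition n l -> l != nseq n 1 -> size l < n.
Proof.
move=> /and3P[_ ao /eqP sn] ln; have [h1 h2] := size_sumn ao.
rewrite ltn_neqAle -{2}sn h1 andbT; apply: contra ln => /eqP e.
have : all (pred1 1) l by rewrite -h2 sn e.
by move/all_pred1P => ->; rewrite e.
Qed.

Local Open Scope ring_scope.

Lemma prod_divs (F : nat -> {poly int}) N i :
  \prod_(d <- divs N i) F d = \prod_(d < N | (d %| i)%N) F d.
Proof. by rewrite big_filter -(big_mkord (fun d => d %| i)%N) /index_iota subn0. Qed.

Definition PF n (e : nat -> nat) : {poly int} := \prod_(d < n.+1 | odd d) Psi d ^+ e d.

Lemma h_O_PF n l : h_O n l = PF n (Ex n l).
Proof.
rewrite /h_O /PF /Ex.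
under eq_bigr => i oi do rewrite (@onepXi i n.+1 oi (ltn_ord i)) prod_divs -prodrXl.
rewrite (exchange_big_dep (fun d : 'I_n.+1 => odd d)) /=; last first.
  by move=> i j oi ji; move: oi; rewrite -(divnK ji) oddM => /andP[].
by apply: eq_bigr => d od; rewrite prodrXr.
Qed.

Lemma PF_add n a b : PF n (fun d => (a d + b d)%N) = PF n a * PF n b.
Proof. by rewrite /PF -big_split; apply: eq_bigr => d _; rewrite exprD. Qed.

Lemma PF_eq n a b : (forall d, odd d -> (d <= n)%N -> a d = b d) -> PF n a = PF n b.
Proof. by move=> h; apply: eq_bigr => d od; rewrite h // -ltnS ltn_ord. Qed.

Lemma PF_monic n a : PF n a \is monic.
Proof.
by apply: monic_prod => d _; apply: monic_exp; apply: Cyclotomic_monic.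
Qed.

Definition Dn n := PF n (cx n).

Lemma h_O_D n l : is_odd_partition n l ->
  h_O n l = PF n (fun d => n %/ d - count (fun x => d %| x) l)%N * Dn n.
Proof.
move=> lP; rewrite h_O_PF /Dn mulrC -PF_add; apply: PF_eq => d od dn.
by rewrite Ex_c.
Qed.

Lemma Psi1 : Psi 1 = 1 + 'X.
Proof.
have := @onepXi 1 2 erefl erefl; rewrite expr1 => ->.
by rewrite /divs /= big_cons big_nil mulr1.
Qed.

Lemma W_prod i N : odd i -> (i < N)%N ->
  \prod_(d < N | (d != 1%N :> nat) && (d %| i)%N) (Psi d).[-1] = i%:Z.
Proof.
move=> oi iN; have i0 : (0 < i)%N by case: i oi iN.
have N1 : (1 < N)%N by lia.
have := @onepXi i N oi iN; rewrite prod_divs (bigD1 (Ordinal N1)) ?dvd1n //= Psi1.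
have e : 1 + 'X^i = (1 + 'X) * \sum_(k < i) 'X^(i.-1 - k) * (- 1) ^+ k :> {poly int}.
  have := subrXX 'X (-1 : {poly int}) i.
  rewrite -signr_odd oi expr1 => h.
  transitivity ('X^i - (-1) : {poly int}); first ring.
  rewrite h; ring.
have nz : (1 + 'X : {poly int}) != 0 by rewrite -size_poly_eq0 addrC size_XaddC.
rewrite e => /(mulfI nz) h.
rewrite (eq_bigl (fun d : 'I_N => (d %| i)%N && (d != Ordinal N1))); last first.
  by move=> d; rewrite andbC -val_eqE.
rewrite -horner_prod -h.
rewrite horner_sum; under eq_bigr => k _ do rewrite hornerM hornerXn hornerE.
rewrite (eq_bigr (fun _ => 1)) ?sumr_const ?card_ord ?natz // => k _.
rewrite hornerN hornerC -exprD subnK; last by rewrite -ltnS prednK // ltn_ord.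
by rewrite -signr_odd; move: oi; clear; case: i => //= j /negbTE ->.
Qed.

Local Close Scope ring_scope.

Lemma odd_part2 M : odd (M`_(2^'))%N.
Proof. by rewrite odd_2'nat part_pnat. Qed.

Lemma dvd_odd_part d m : odd d -> (0 < m)%N -> (d %| m)%N = (d %| m`_(2^'))%N.
Proof.
move=> od m0; apply/idP/idP => [dm|dm]; last exact: dvdn_trans dm (dvdn_part _ _).
have pd : 2^'.-nat d by rewrite -odd_2'nat.
by rewrite -(part_pnat_id pd) partn_dvd.
Qed.

Lemma odd_part_eq M : (0 < M)%N -> odd_part M = (M`_(2^'))%N.
Proof.
move=> M0; apply/eqP; rewrite eqn_leq; apply/andP; split.
  apply/bigmax_leqP => d /andP[od dM].
  by apply: dvdn_leq; [exact: part_gt0 | rewrite -dvd_odd_part].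
have Mlt : (M`_(2^') < M.+1)%N by rewrite ltnS dvdn_leq ?dvdn_part.
apply: (@leq_bigmax_cond _ _ (fun d : 'I_M.+1 => nat_of_ord d) (Ordinal Mlt)).
by rewrite /= odd_part2 dvdn_part.
Qed.

Local Open Scope ring_scope.

Lemma prod_pow (x : int) n d : (0 < d)%N ->
  \prod_(m < n.+1 | (0 < m)%N && (d %| m)%N) x = x ^+ (n %/ d).
Proof.
move=> d0; elim: n => [|n IH].
  by rewrite big_mkcond big_ord_recl big_ord0 /= div0n.
rewrite big_mkcond big_ord_recr /= -big_mkcond IH divnS // exprD.
by rewrite mulrC; case: (d %| n.+1)%N; rewrite ?expr1 ?expr0.
Qed.

Lemma prod_oddpart n :
  \prod_(m < n.+1 | (0 < m)%N) ((m`_(2^'))%N)%:Z = (((n`!)`_(2^'))%N)%:Z.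
Proof.
elim: n => [|n IH].
  by rewrite big_mkcond big_ord_recl big_ord0 /= mulr1 partn1.
rewrite big_mkcond big_ord_recr /= -big_mkcond IH factS partnM ?fact_gt0 //.
by rewrite PoszM mulrC.
Qed.

Lemma final_nt n :
  \prod_(d < n.+1 | odd d) ((Psi d).[-1]) ^+ (n %/ d - (d == 1%N :> nat) * n)%N
  = (((n`!)`_(2^'))%N)%:Z.
Proof.
transitivity (\prod_(d < n.+1 | odd d && (d != 1%N :> nat)) (Psi d).[-1] ^+ (n %/ d)).
  rewrite [LHS]big_mkcond [RHS]big_mkcond; apply: eq_bigr => d _.
  case: (odd d) => //=; case: eqP => [->|_] /=.
    by rewrite divn1 (_ : (_ * n)%N = n) ?subnn ?expr0 //= mul1n.
  by rewrite (_ : (_ * n)%N = 0%N) ?subn0 //= mul0n.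
transitivity (\prod_(d < n.+1 | odd d && (d != 1%N :> nat))
   \prod_(m < n.+1 | (0 < m)%N && (d %| m)%N) (Psi d).[-1]).
  apply: eq_bigr => d /andP[od _]; rewrite prod_pow //; by case: (nat_of_ord d) od.
rewrite (exchange_big_dep (fun m : 'I_n.+1 => (0 < m)%N)) /=; last by move=> ? ? _ /andP[].
rewrite -prod_oddpart; apply: eq_bigr => m m0.
have mlt : ((m`_(2^'))%N < n.+1)%N.
  by apply: leq_ltn_trans (ltn_ord m); apply: dvdn_leq; rewrite ?dvdn_part.
rewrite -(@W_prod _ n.+1 (odd_part2 m) mlt); apply: eq_bigl => d.
rewrite m0 /=; case od: (odd d) => /=.
  by rewrite (dvd_odd_part od m0).
apply/esym/negbTE; apply/negP => /andP[_ dm].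
by move: (odd_part2 m); rewrite -(divnK dm) oddM od andbF.
Qed.

Local Open Scope ring_scope.

Lemma mup_dvd (F : fieldType) z (p q : {poly F}) : q != 0 -> p %| q -> (mup z p <= mup z q)%N.
Proof.
move=> q0 pq; have p0 : p != 0 by apply: contraNneq q0 => p0; move: pq; rewrite p0 dvd0p.
by rewrite mup_geq //; apply: dvdp_trans pq; rewrite -mup_geq.
Qed.

Lemma mup1 (F : fieldType) (z : F) : mup z 1 = 0%N.
Proof. by rewrite mupNroot // root1. Qed.

Lemma mupX (F : fieldType) (z : F) p k : p != 0 -> mup z (p ^+ k) = (k * mup z p)%N.
Proof.
move=> p0; elim: k => [|k IH]; first by rewrite expr0 mup1.
by rewrite exprS mupM ?expf_neq0 // IH mulSn.
Qed.

Lemma dvdp_mup (F : closedFieldType) (p q : {poly F}) : p != 0 -> q != 0 ->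
  (forall z, mup z p <= mup z q)%N -> p %| q.
Proof.
move=> p0 q0 h; have [r pr] := closed_field_poly_normal p.
have c0 : lead_coef p != 0 by rewrite lead_coef_eq0.
have Pr : forall z, mup z p = mup z (\prod_(x <- r) ('X - x%:P)).
  by move=> z; rewrite {1}pr -mul_polyC mupMr // rootC.
rewrite pr dvdpZl //.
have {h Pr} : forall z, (count_mem z r <= mup z q)%N by move=> z; rewrite -mu_prod_XsubC -Pr.
elim: r q q0 {pr} => [|x r IH] q q0 h; first by rewrite big_nil dvd1p.
have : ('X - x%:P) %| q by rewrite XsubC_dvd //; apply: leq_trans (h x); rewrite /= eqxx.
case/dvdpP => q' qe; have q'0 : q' != 0 by apply: contraNneq q0 => e; rewrite qe e mul0r.
rewrite qe big_cons mulrC dvdp_mul2r ?polyXsubC_eq0 //; apply: IH => // z.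
have := h z; rewrite qe mupM ?polyXsubC_eq0 // -[('X - x%:P)]expr1 mup_XsubCX /=.
by case: (x == z) => /=; lia.
Qed.

Notation toC := (map_poly (intr : int -> algC)).

Lemma root_PsiC d z : (0 < d)%N -> root (toC (Psi d)) z = (d.*2).-primitive_root z.
Proof.
move=> d0; have d20 : (0 < d.*2)%N by rewrite double_gt0.
have [w pw] := C_prim_root_exists d20.
by rewrite /Psi (Cintr_Cyclotomic pw) root_cyclotomic.
Qed.

Lemma prim_uniq (F : fieldType) (z : F) m k :
  m.-primitive_root z -> k.-primitive_root z -> m = k.
Proof.
move=> pm pk; apply/eqP; rewrite eqn_dvd (prim_order_dvd pm) (prim_order_dvd pk).
by rewrite (prim_expr_order pm) (prim_expr_order pk) eqxx.
Qed.

Lemma PsiC_neq0 d : toC (Psi d) != 0.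
Proof. by apply: monic_neq0; apply: monic_map; apply: Cyclotomic_monic. Qed.

Lemma toC_PF n e : toC (PF n e) = \prod_(d < n.+1 | odd d) toC (Psi d) ^+ e d.
Proof. by rewrite rmorph_prod; apply: eq_bigr => d _; rewrite rmorphXn. Qed.

Lemma PFC_neq0 n e : toC (PF n e) != 0.
Proof. by apply: monic_neq0; apply: monic_map; apply: PF_monic. Qed.

Lemma mup_PF_sum n e z : mup z (toC (PF n e)) =
  (\sum_(d < n.+1 | odd d) e d * mup z (toC (Psi d)))%N.
Proof.
rewrite toC_PF.
suff [] : \prod_(d < n.+1 | odd d) toC (Psi d) ^+ e d != 0 /\
  mup z (\prod_(d < n.+1 | odd d) toC (Psi d) ^+ e d) =
  (\sum_(d < n.+1 | odd d) e d * mup z (toC (Psi d)))%N by [].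
elim/big_rec2: _ => [|d a p od [p0 pa]]; first by rewrite oner_neq0 mup1.
split; first by rewrite mulf_neq0 // expf_neq0 // PsiC_neq0.
by rewrite mupM ?expf_neq0 ?PsiC_neq0 // mupX ?PsiC_neq0 // pa.
Qed.

Lemma mup_PF_root n e z (dl : 'I_n.+1) : odd dl -> root (toC (Psi dl)) z ->
  mup z (toC (PF n e)) = (e dl * mup z (toC (Psi dl)))%N.
Proof.
move=> od rd; rewrite mup_PF_sum (bigD1 dl) //= big1 ?addn0 // => d /andP[od' dne].
rewrite mupNroot ?muln0 //; apply/negP => rd'.
have d0 : (0 < d)%N by case: (nat_of_ord d) od'.
have dl0 : (0 < dl)%N by case: (nat_of_ord dl) od.
rewrite root_PsiC // in rd'; rewrite root_PsiC // in rd.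
move: dne; have := prim_uniq rd rd' => /double_inj e'.
by rewrite -val_eqE /= e' eqxx.
Qed.

Lemma mup_PF_noroot n e z :
  (forall dl : 'I_n.+1, odd dl -> ~~ root (toC (Psi dl)) z) -> mup z (toC (PF n e)) = 0%N.
Proof.
move=> h; rewrite mup_PF_sum big1 // => d od; by rewrite mupNroot ?muln0 // h.
Qed.

Lemma toC_inj : injective (toC).
Proof. exact: map_inj_poly (@intr_inj algC) (rmorph0 _). Qed.

Lemma size_toC p : size (toC p) = size p.
Proof. exact: size_map_inj_poly (@intr_inj algC) (rmorph0 _) p. Qed.

Definition lam n (d : nat) : seq nat := nseq (n %/ d)%N d ++ nseq (n %% d)%N 1%N.

Lemma common_div n g : (forall l, l \in odd_partitions n -> dvdZX g (h_O n l)) ->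
  dvdZX g (Dn n).
Proof.
move=> H.
have m1 : nseq n 1 \in odd_partitions n by rewrite mem_op ones_op.
have [q1 e1] := H _ m1.
have hm : h_O n (nseq n 1) \is monic by rewrite h_O_PF PF_monic.
have g0 : g != 0.
  by apply/eqP => g0; move: hm; rewrite e1 g0 mulr0 => /monic_neq0; rewrite eqxx.
have ulc : lead_coef g \is a GRing.unit.
  apply/unitrP; exists (lead_coef q1).
  have : lead_coef q1 * lead_coef g = 1 by rewrite -lead_coefM -e1; apply/monicP.
  by move=> h; split => //; rewrite mulrC.
have gC0 : toC g != 0 by rewrite -size_poly_eq0 size_toC size_poly_eq0.
have gCD : toC g %| toC (Dn n).
  apply: dvdp_mup => //; first exact: PFC_neq0.
  move=> z.
  case: (pickP (fun dl : 'I_n.+1 => odd dl && root (toC (Psi dl)) z)) => [dl /andP[od rd] | none].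
    have lP : is_odd_partition n (lam n dl) := lam_op n od.
    have m2 : lam n dl \in odd_partitions n by rewrite mem_op.
    have [q2 e2] := H _ m2.
    have dv : toC g %| toC (PF n (Ex n (lam n dl))) by rewrite -h_O_PF e2 rmorphM /= dvdp_mull.
    have := mup_dvd z (PFC_neq0 n (Ex n (lam n dl))) dv.
    rewrite (mup_PF_root _ od rd) /Dn (mup_PF_root _ od rd).
    by rewrite Ex_c // ?(lam_count n od) // ?subnn ?addn0 // -ltnS.
  have dv : toC g %| toC (PF n (Ex n (nseq n 1))) by rewrite -h_O_PF e1 rmorphM /= dvdp_mull.
  have := mup_dvd z (PFC_neq0 n (Ex n (nseq n 1))) dv.
  rewrite mup_PF_noroot; first by rewrite leqn0 => /eqP ->.
  by move=> dl od; have := none dl; rewrite od /= => ->.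
have de := Pdiv.IdomainUnit.divp_eq ulc (Dn n).
have rs : (size (Dn n %% g)%R < size g)%N by rewrite ltn_modp.
have r0 : Dn n %% g = 0.
  apply/eqP; rewrite -size_poly_eq0 -size_toC size_poly_eq0; apply/negP => /negP rn0.
  have : toC g %| toC (Dn n %% g).
    by move: gCD; rewrite {1}de rmorphD rmorphM /= dvdp_addr // dvdp_mull.
  by move/(dvdp_leq rn0); rewrite !size_toC leqNgt rs.
by exists (Dn n %/ g); rewrite {1}de r0 addr0.
Qed.

Local Open Scope ring_scope.

Lemma Dn_neq0 n : Dn n != 0.
Proof. exact/monic_neq0/PF_monic. Qed.

Lemma isG n : is_G_O n (Dn n).
Proof.
split.
- move=> l; rewrite mem_op => lP; eexists; exact: h_O_D.
- exact: common_div.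
- by rewrite (monicP (PF_monic _ _)).
Qed.

Lemma GD n : G_O n = Dn n.
Proof.
have GP : is_G_O n (G_O n) by apply: epsilon_spec; exists (Dn n); apply: isG.
case: GP => G1 G2 G3; case: (isG n) => D1 D2 D3.
have [a ea] := G2 _ D1; have [b eb] := D2 _ G1.
have D0 := Dn_neq0 n.
have ba1 : b * a = 1 by apply: (mulIf D0); rewrite mul1r -mulrA -ea -eb.
have a0 : a != 0 by apply: contra_eq_neq ba1 => ->; rewrite mulr0 eq_sym oner_neq0.
have b0 : b != 0 by apply: contra_eq_neq ba1 => ->; rewrite mul0r eq_sym oner_neq0.
have sa : size a = 1%N.
  have := size_mul b0 a0; rewrite ba1 size_poly1.
  have : (0 < size a)%N by rewrite size_poly_gt0.
  have : (0 < size b)%N by rewrite size_poly_gt0.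
  move=> ? ? h; have h' : ((size b + size a).-1 = 1)%N := esym h.
  lia.
have ac := size1_polyC (eq_leq sa); set c := a`_0 in ac.
have lc : lead_coef (G_O n) = c by rewrite ea ac lead_coefM lead_coefC (monicP (PF_monic _ _)) mulr1.
have c1 : c = 1.
  have h : (b * a)`_0 = 1 by rewrite ba1 coef1.
  rewrite ac coefMC in h.
  move: G3; rewrite lc => c0.
  have := intUnitRing.unitzPl h; rewrite qualifE /= => /orP[/eqP //|/eqP cm].
  by move: c0; rewrite cm.
by rewrite ea ac c1 mul1r.
Qed.

Lemma num_eq n : num_O n =
  \sum_(l <- odd_partitions n) PF n (fun d => n %/ d - count (fun x => d %| x) l)%N.
Proof.
have e : sum_h_O n = (\sum_(l <- odd_partitions n)
    PF n (fun d => n %/ d - count (fun x => d %| x) l)%N) * Dn n.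
  rewrite /sum_h_O mulr_suml; rewrite big_seq [RHS]big_seq; apply: eq_bigr => l.
  by rewrite mem_op => /h_O_D.
have e' : sum_h_O n = (\sum_(l <- odd_partitions n)
    PF n (fun d => n %/ d - count (fun x => d %| x) l)%N) * G_O n by rewrite GD.
have NP : sum_h_O n = num_O n * G_O n :=
  @epsilon_spec _ (inhabits 0) (fun q : {poly int} => sum_h_O n = q * G_O n) (ex_intro _ _ e').
by apply: (mulIf (Dn_neq0 n)); rewrite -e -GD.
Qed.

Theorem theorem3 (n : nat) : (1 <= n)%N ->
  (num_O n).[-1] = ((odd_part n`!)%:Z : int).
Proof.
move=> n1.
rewrite num_eq horner_sum (bigD1_seq (nseq n 1)) ?uniq_op ?mem_op ?ones_op //=.
rewrite big1_seq ?addr0.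
  rewrite horner_prod; under eq_bigr => d _ do rewrite horner_exp ones_count.
  by rewrite final_nt odd_part_eq ?fact_gt0.
move=> l /andP[ln lm]; rewrite mem_op in lm.
have N1 : (1 < n.+1)%N by rewrite ltnS.
rewrite horner_prod (bigD1 (Ordinal N1)) //= horner_exp Psi1.
rewrite !hornerE addrN expr0n.
have -> : count (fun x => 1 %| x)%N l = size l by rewrite (eq_count (a2 := predT)) ?count_predT // => x; rewrite dvd1n.
rewrite divn1; have := op_size lm ln; case e: (n - size l)%N => [|k] /= h; first by move: h; rewrite -subn_gt0 e.
by rewrite mul0r.
Qed.
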